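(* Let $\mathcal{X}$ be finite and $\mathcal{Y}=\{0,1\}$, with a single receiver. For any $\epsilon$ with $0<\epsilon<\min_{i\in[m]}\mathrm{len}(J_i)$ and any randomized predictor $f\in\Delta(\mathcal{H}_{\mathrm{all}})$ that is $\gamma$-decision calibrated, there exists a randomized predictor $f'\in\Delta(\mathcal{H}_\epsilon)$ such that (1) the sender obtains the same expected utility under $f$ and $f'$, i.e. $\mathbb{E}_{h\sim f}\mathbb{E}_{\mathcal{D}}[\sum_a u(a,y)b(h(x),a)]=\mathbb{E}_{h\sim f'}\mathbb{E}_{\mathcal{D}}[\sum_a u(a,y)b(h(x),a)]$, and (2) $f'$ is $(\gamma+\epsilon)$-decision calibrated.
   Context: $(x,y)\sim\mathcal{D}$ on $\mathcal{X}\times\{0,1\}$, $\mathcal{X}$ finite. The receiver has actions $\mathcal{A}=\{a_1,\dots,a_m\}$ and utility $v:\mathcal{A}\times\{0,1\}\to[0,1]$; the sender has utility $u:\mathcal{A}\times\{0,1\}\to[0,1]$. For a prediction $p\in[0,1]$, the receiver's best response is $\arg\max_a\mathbb{E}_{y\sim\mathrm{Ber}(p)}[v(a,y)]$, ties broken in favor of the sender; $b(p,a)=1$ if $a$ is this best response and $0$ otherwise. $J_i=\{p\in[0,1]:a_i\text{ is the best response to }p\}$; each $J_i$ is an interval and $\{J_i\}$ partitions $[0,1]$. $\mathcal{Z}$ is the set of thresholds between adjacent best-response intervals, and $\Theta=\{\Pr[y=1\mid x]:x\in\mathcal{X}\}$. $S_\epsilon=(\{0,\epsilon,2\epsilon,\dots\}\cap[0,1])\cup\mathcal{Z}\cup\Theta$.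 $\mathcal{H}_{\mathrm{all}}$ is the set of all functions $\mathcal{X}\to[0,1]$ and $\mathcal{H}_\epsilon=\{h:\mathcal{X}\to S_\epsilon\}$. A randomized predictor $f$ (distribution over such functions) is $\gamma$-decision calibrated if $|\mathbb{E}_{h\sim f}\mathbb{E}_{(x,y)\sim\mathcal{D}}[(y-h(x))b(h(x),a)]|\le\gamma$ for every $a\in\mathcal{A}$. *)

(* Defs.v *)
From HB Require Import structures.
From mathcomp Require Import all_boot all_order all_algebra.
From mathcomp Require Import all_classical all_reals all_analysis.
Set Implicit Arguments. Unset Strict Implicit. Unset Printing Implicit Defensive.
Import Order.TTheory GRing.Theory Num.Theory.
Local Open Scope classical_set_scope.
Local Open Scope ring_scope.

Section Defs.
Variables (R : realType) (X A : finType).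

Definition exp_util (w : A -> bool -> R) (a : A) (p : R) : R :=
  (1 - p) * w a false + p * w a true.

Definition is_best_response (v u : A -> bool -> R) (br : R -> A) : Prop :=
  forall p, 0 <= p <= 1 ->
    (forall a, exp_util v a p <= exp_util v (br p) p) /\
    (forall a, exp_util v a p = exp_util v (br p) p ->
               exp_util u a p <= exp_util u (br p) p).

Definition bfun (br : R -> A) (p : R) (a : A) : R := if br p == a then 1 else 0.

Definition Jset (br : R -> A) (a : A) : set R := [set p | 0 <= p <= 1 /\ br p = a].

Definition is_interval_set (J : set R) : Prop :=
  forall p q r, J p -> J r -> p <= q -> q <= r -> J q.

(* length of an interval: sup of the distances between its points (0 if empty) *)
Definition len (J : set R) : R :=
  sup [set d | exists p q, J p /\ J q /\ d = q - p].

Definition thresholds (br : R -> A) : set R :=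
  [set z | exists a a', a != a' /\ Jset br a !=set0 /\ Jset br a' !=set0 /\
           z = sup (Jset br a) /\ z = inf (Jset br a')].

Definition Theta (D : X -> bool -> R) : set R :=
  [set t | exists x, t = D x true / (D x false + D x true)].

Definition S_eps (eps : R) (br : R -> A) (D : X -> bool -> R) : set R :=
  ([set t | exists k : nat, t = k%:R * eps] `&` [set t | 0 <= t <= 1])
  `|` thresholds br `|` Theta D.

Definition sender_util (D : X -> bool -> R) (u : A -> bool -> R) (br : R -> A)
  (g : X -> R) : R :=
  \sum_(x : X) \sum_(y : bool) D x y * \sum_(a : A) u a y * bfun br (g x) a.

Definition calib_term (D : X -> bool -> R) (br : R -> A) (g : X -> R) (a : A) : R :=
  \sum_(x : X) \sum_(y : bool) D x y * (((if y then 1 else 0) - g x) * bfun br (g x) a).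

(* A randomized predictor is a random function h : Omega -> (X -> R) on a
   probability space; it lies in Delta(H) when all its values lie in V. *)
Definition rand_predictor d (Omega : measurableType d) (h : Omega -> X -> R)
  (V : set R) : Prop :=
  (forall x, measurable_fun setT (fun w => h w x)) /\ (forall w x, V (h w x)).

Definition sender_value d (Omega : measurableType d) (P : probability Omega R)
  (D : X -> bool -> R) (u : A -> bool -> R) (br : R -> A) (h : Omega -> X -> R)
  : \bar R :=
  \int[P]_w (sender_util D u br (h w))%:E.

Definition decision_calibrated d (Omega : measurableType d) (P : probability Omega R)
  (D : X -> bool -> R) (br : R -> A) (h : Omega -> X -> R) (gamma : R) : Prop :=
  forall a : A, (`| \int[P]_w (calib_term D br (h w) a)%:E | <= gamma%:E)%E.

End Defs.

(* Main.v *)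
Require Import Defs.
From HB Require Import structures.
From mathcomp Require Import all_boot all_order all_algebra.
From mathcomp Require Import all_classical all_reals all_analysis.
From mathcomp Require Import lra ring.
From mathcomp Require Import measurable_realfun.
Import Order.TTheory GRing.Theory Num.Theory.
Local Open Scope classical_set_scope.
Local Open Scope ring_scope.

Lemma len_gap {R : realType} (J : set R) (p c eps : R) :
  is_interval_set J -> J p -> eps < len J -> c <= p -> p < c + eps -> ~ J c ->
  J (c + eps).
Proof.
move=> Jint Jp elen cp pce nJc.
have [p' [q [Jp' [Jq lt]]]] : exists p' q, J p' /\ J q /\ eps < q - p'.
  case: (pselect (exists p' q, J p' /\ J q /\ eps < q - p')) => // H.
  exfalso; have : len J <= eps.
    apply: ge_sup; first by exists 0, p, p; rewrite subrr.
    move=> dd [p' [q [Jp' [Jq ->]]]]; rewrite leNgt; apply/negP => hlt.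
    by apply: H; exists p', q.
  by rewrite leNgt elen.
have cp' : c < p'.
  rewrite ltNge; apply/negP => hle; apply: nJc; exact: (Jint p' c p Jp' Jp hle cp).
apply: (Jint p (c + eps) q Jp Jq); first exact: ltW.
lra.
Qed.
Definition rnd {R : realType} {A : finType} (br : R -> A) (eps : R) (p : R) : R :=
  \sum_(k < (Num.trunc (1/eps)).+1)
    \1_(`[k%:R * eps, k.+1%:R * eps[%classic) p *
    (k%:R * eps + eps * (1 - \1_(Jset br (br (k%:R * eps))) p)).

Lemma rnd_eq {R : realType} {A : finType} (br : R -> A) (eps p : R) :
  0 < eps -> 0 <= p <= 1 ->
  let k0 := Num.trunc (p / eps) in
  [/\ k0%:R * eps <= p, p < k0.+1%:R * eps &
  rnd br eps p = k0%:R * eps + eps * (1 - \1_(Jset br (br (k0%:R * eps))) p)].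
Proof.
move=> e0 /andP[p0 p1] k0.
have pe0 : 0 <= p / eps by rewrite divr_ge0// ltW.
have /andP[h1 h2] := trunc_itv pe0.
rewrite ler_pdivlMr// ltr_pdivrMr// in h1 h2.
have hk0 : (k0 < (Num.trunc (1/eps)).+1)%N.
  rewrite ltnS truncn_le_nat; apply: le_lt_trans (truncnS_gt _).
  by rewrite ler_wpM2r// invr_ge0 ltW.
split => //.
rewrite /rnd (bigD1 (Ordinal hk0)) //= big1 ?addr0.
  by rewrite indicE mem_set ?mul1r //= in_itv /= h1 h2.
move=> k hk; rewrite indicE memNset ?mul0r //= in_itv /= => /andP[k1 k2].
move: hk; rewrite -val_eqE /= => /eqP; apply; rewrite /k0.
apply/esym/truncn_def.
by rewrite ler_pdivlMr// ltr_pdivrMr// k1 k2.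
Qed.

Lemma Jset_in {R : realType} {A : finType} (br : R -> A) a p :
  0 <= p <= 1 -> (p \in Jset br a) = (br p == a).
Proof.
move=> hp; apply/idP/eqP; first by rewrite inE => -[].
by move=> <-; rewrite inE.
Qed.

Lemma rnd_spec {R : realType} {A : finType} (br : R -> A) (eps p : R) :
  0 < eps -> (forall a, is_interval_set (Jset br a)) ->
  (forall a, eps < len (Jset br a)) -> 0 <= p <= 1 ->
  [/\ br (rnd br eps p) = br p, `|rnd br eps p - p| <= eps,
      0 <= rnd br eps p <= 1 & exists n : nat, rnd br eps p = n%:R * eps].
Proof.
move=> e0 Jint Jlen hp.
have [h1 h2 ->] := @rnd_eq R A br eps p e0 hp.
set k0 := Num.trunc (p / eps).
set c := k0%:R * eps.
rewrite -/k0 -/c in h1 h2.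
have h2' : p < c + eps by move: h2; rewrite mulrSr mulrDl mul1r.
have c0 : 0 <= c by rewrite mulr_ge0// ltW.
have hc : 0 <= c <= 1 by rewrite c0 /= (le_trans h1)//; case/andP: hp.
rewrite -/c indicE Jset_in//.
case: eqP => E.
  rewrite subrr mulr0 addr0; split => //.
  - rewrite ler_distlC; apply/andP; split; lra.
  - by exists k0.
have nJc : ~ Jset br (br p) c by move=> [_ ] /esym.
have Jp : Jset br (br p) p by [].
have J2 : Jset br (br p) (c + eps) := @len_gap _ _ p c eps (Jint (br p)) Jp (Jlen _) h1 h2' nJc.
rewrite /= subr0 mulr1.
case: J2 => hce brc; split => //.
- rewrite ler_distlC; apply/andP; split; lra.
- by exists k0.+1; rewrite mulrSr mulrDl mul1r.
Qed.

Lemma is_interval_Jset {R : realType} {A : finType} (br : R -> A) a :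
  is_interval_set (Jset br a) -> is_interval (Jset br a).
Proof. by move=> Jint x y Jx Jy z /andP[h1 h2]; exact: (Jint x z y). Qed.

Lemma rnd_measurable {R : realType} {A : finType} (br : R -> A) (eps : R) :
  (forall a, is_interval_set (Jset br a)) -> measurable_fun setT (rnd br eps).
Proof.
move=> Jint; rewrite /rnd.
apply: measurable_sum => k.
have m1 : measurable_fun setT (\1_(`[k%:R * eps, k.+1%:R * eps[%classic) : R -> R).
  by apply: measurable_indic; exact: measurable_itv.
have mJ : measurable_fun setT (\1_(Jset br (br (k%:R * eps))) : R -> R).
  by apply: measurable_indic; apply: is_interval_measurable; exact: is_interval_Jset.
exact: measurable_funM m1 (measurable_funD (measurable_cst _)
  (measurable_funM (measurable_cst _) (measurable_funB (measurable_cst _) mJ))).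
Qed.

Lemma bfun_indic {R : realType} {A : finType} (br : R -> A) p a :
  0 <= p <= 1 -> bfun br p a = \1_(Jset br a) p.
Proof. by move=> hp; rewrite /bfun indicE Jset_in//; case: eqP. Qed.

Lemma calib_meas {R : realType} {X A : finType} (D : X -> bool -> R) (br : R -> A)
  d (Omega : measurableType d) (g : Omega -> X -> R) a :
  (forall a, is_interval_set (Jset br a)) ->
  (forall x, measurable_fun setT (fun w => g w x)) ->
  (forall w x, 0 <= g w x <= 1) ->
  measurable_fun setT (fun w => calib_term D br (g w) a).
Proof.
move=> Jint mg g01.
rewrite (_ : (fun w => _) = fun w => \sum_(x : X) \sum_(y : bool)
   D x y * (((if y then 1 else 0) - g w x) * \1_(Jset br a) (g w x))).
  apply: measurable_sum => x; apply: measurable_sum => y.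
  apply: measurable_funM; first exact: measurable_cst.
  apply: measurable_funM; first exact: measurable_funB (measurable_cst _) (mg x).
  apply: measurableT_comp (mg x).
  by apply: measurable_indic; apply: is_interval_measurable; exact: is_interval_Jset.
apply/funext => w; apply: eq_bigr => x _; apply: eq_bigr => y _.
by rewrite bfun_indic.
Qed.

Lemma calib_bound {R : realType} {X A : finType} (D : X -> bool -> R) (br : R -> A)
  (g : X -> R) a :
  (forall x y, 0 <= D x y) -> \sum_(x : X) \sum_(y : bool) D x y = 1 ->
  (forall x, 0 <= g x <= 1) ->
  `|calib_term D br g a| <= 1.
Proof.
move=> D0 D1 g01; rewrite -D1 /calib_term.
apply: le_trans (ler_norm_sum _ _ _) _; apply: ler_sum => x _.
apply: le_trans (ler_norm_sum _ _ _) _; apply: ler_sum => y _.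
rewrite normrM ger0_norm// -[leRHS]mulr1; apply: ler_wpM2l => //.
rewrite normrM; have /andP[g0 g1] := g01 x.
have hb : `|bfun br (g x) a| <= 1 by rewrite /bfun; case: eqP; rewrite ?normr1 ?normr0.
have hc : `|(if y then 1 else 0) - g x| <= 1.
  by case: y; rewrite ler_norml; apply/andP; split; lra.
by rewrite -[leRHS](mulr1 1); apply: ler_pM.
Qed.

Lemma calib_diff {R : realType} {X A : finType} (D : X -> bool -> R) (br : R -> A)
  (g g' : X -> R) a eps :
  (forall x y, 0 <= D x y) -> \sum_(x : X) \sum_(y : bool) D x y = 1 ->
  (forall x, br (g' x) = br (g x)) -> (forall x, `|g' x - g x| <= eps) ->
  `|calib_term D br g' a - calib_term D br g a| <= eps.
Proof.
move=> D0 D1 Eb Ed.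
have -> : eps = \sum_(x : X) \sum_(y : bool) D x y * eps.
  by rewrite -[LHS]mul1r -D1 mulr_suml; apply: eq_bigr => x _; rewrite mulr_suml.
rewrite /calib_term -sumrB.
apply: le_trans (ler_norm_sum _ _ _) _; apply: ler_sum => x _.
rewrite -sumrB.
apply: le_trans (ler_norm_sum _ _ _) _; apply: ler_sum => y _.
rewrite /bfun Eb -mulrBr normrM ger0_norm//; apply: ler_wpM2l => //.
rewrite -mulrBl normrM.
have -> : (if y then 1 else 0) - g' x - ((if y then 1 else 0) - g x) = - (g' x - g x) by ring.
rewrite normrN -[leRHS]mulr1; apply: ler_pM => //.
by case: eqP; rewrite ?normr1 ?normr0.
Qed.

Lemma bounded1 {R : realType} {T : Type} (f : T -> R) :
  (forall w, `|f w| <= 1) -> [bounded f x | x in setT].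
Proof.
move=> hf; exists 1; split => // M M1 w _ /=.
by apply: le_trans (hf w) _; exact: ltW.
Qed.

Theorem theorem5 (R : realType) (X A : finType) (D : X -> bool -> R)
  (v u : A -> bool -> R) (br : R -> A) (eps gamma : R)
  (d : measure_display) (Omega : measurableType d) (P : probability Omega R)
  (h : Omega -> X -> R) :
  (forall x y, 0 <= D x y) ->
  \sum_(x : X) \sum_(y : bool) D x y = 1 ->
  (forall a y, 0 <= v a y <= 1) ->
  (forall a y, 0 <= u a y <= 1) ->
  is_best_response v u br ->
  (forall a, is_interval_set (Jset br a)) ->
  0 < eps ->
  (forall a, eps < len (Jset br a)) ->
  rand_predictor h [set t | 0 <= t <= 1] ->
  decision_calibrated P D br h gamma ->
  exists (d' : measure_display) (Omega' : measurableType d')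
         (P' : probability Omega' R) (h' : Omega' -> X -> R),
    rand_predictor h' (S_eps eps br D) /\
    sender_value P D u br h = sender_value P' D u br h' /\
    decision_calibrated P' D br h' (gamma + eps).
Proof.
move=> D0 D1 v01 u01 hbr Jint e0 Jlen [hm hv] hcal.
have spec w x := @rnd_spec R A br eps (h w x) e0 Jint Jlen (hv w x).
pose h' := fun w x => rnd br eps (h w x).
have hm' : forall x, measurable_fun setT (fun w => h' w x).
  move=> x; apply: (measurableT_comp (f := rnd br eps)); [exact: rnd_measurable | exact: hm].
have hv' : forall w x, 0 <= h' w x <= 1 by move=> w x; have [] := spec w x.
exists d, Omega, P, h'.
split; [split|split].
- exact: hm'.
- move=> w x; have [_ _ h01 [n hn]] := spec w x.
  by left; left; split => //; exists n.
- rewrite /sender_value; apply: eq_integral => w _; congr (_%:E).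
  rewrite /sender_util; apply: eq_bigr => x _.
  by have [E _ _ _] := spec w x; rewrite /h' /bfun E.
move=> a.
pose f := fun w => calib_term D br (h w) a.
pose f' := fun w => calib_term D br (h' w) a.
have mf : measurable_fun setT f by exact: calib_meas.
have mf' : measurable_fun setT f' by exact: calib_meas.
have Pfin : (P setT < +oo)%E by rewrite probability_setT ltry.
have if1 : P.-integrable setT (EFin \o f).
  apply: measurable_bounded_integrable => //; apply: bounded1 => w.
  by rewrite /f; apply: calib_bound => // x; exact: (hv w x).
have if2 : P.-integrable setT (EFin \o f').
  apply: measurable_bounded_integrable => //; apply: bounded1 => w.
  by rewrite /f'; apply: calib_bound => // x; exact: (hv' w x).
have fin1 := integrable_fin_num measurableT if1.
have fin2 := integrable_fin_num measurableT if2.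
have hB := integralB measurableT if2 if1.
have mdiff : measurable_fun setT ((EFin \o f') \- (EFin \o f))%E.
  rewrite (_ : ((EFin \o f') \- (EFin \o f))%E = EFin \o (f' \- f)).
    by apply/measurable_EFinP; exact: measurable_funB.
  by apply/funext => w /=; rewrite EFinB.
have hd : (`|\int[P]_w ((EFin \o f') \- (EFin \o f))%E w| <= eps%:E)%E.
  apply: le_trans (le_abse_integral P measurableT mdiff) _.
  apply: le_trans (integral_le_bound (eps%:E) measurableT mdiff _ _) _.
  - by rewrite lee_fin ltW.
  - apply: aeW => w _ /=; rewrite lee_fin.
    apply: calib_diff => // x; have [E dd _ _] := spec w x; by [].
  - by have P1 := probability_setT P; rewrite /= in P1 *; rewrite P1 mule1.
move: (hcal a) hB hd fin1 fin2; rewrite /=.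
move=> H1 HB Hd F1 F2.
change (is_true (`|\int[P]_w (f w)%:E| <= gamma%:E)%E) in H1.
change (is_true (`|\int[P]_w (f' w)%:E| <= (gamma + eps)%:E)%E).
rewrite HB in Hd.
move: H1 Hd F1 F2.
set I1 := (\int[P]_w (f w)%:E)%E.
set I2 := (\int[P]_w (f' w)%:E)%E.
move=> H1 Hd F1 F2.
rewrite -(fineK F1) -(fineK F2) in H1 Hd *.
rewrite -EFinB !abse_EFin !lee_fin in H1 Hd *.
have -> : fine I2 = fine I1 + (fine I2 - fine I1) by ring.
apply: le_trans (ler_normD _ _) _.
exact: lerD.
Qed.
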